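(* Let $G$ be a finite group, let $s: G \to \mathbb{Z}_2=\{0,1\}$ be a group homomorphism, and let $\lambda: G\times G\to \mathbb{Z}_2$ be a 2-cocycle (i.e. $\lambda(\mathbf{h},\mathbf{k})-\lambda(\mathbf{g}\mathbf{h},\mathbf{k})+\lambda(\mathbf{g},\mathbf{h}\mathbf{k})-\lambda(\mathbf{g},\mathbf{h})=0 \bmod 2$ for all $\mathbf{g},\mathbf{h},\mathbf{k}\in G$) normalized so that $\lambda(\mathbf{1},\mathbf{g})=\lambda(\mathbf{g},\mathbf{1})=0$. Let $G_f=\{\mathbf{g}_\sigma : \mathbf{g}\in G,\ \sigma\in\mathbb{Z}_2\}$ with multiplication $\mathbf{g}_\sigma\mathbf{h}_\tau=(\mathbf{g}\mathbf{h})_{\sigma+\tau+\lambda(\mathbf{g},\mathbf{h})}$, and put $P_f=\mathbf{1}_1$ and $s(\mathbf{g}_\sigma)=s(\mathbf{g})$. Then the following are equivalent: (i) there is NO function $U: G_f\to U(1)$ with $U(\mathbf{1}_0)=1$, $U(P_f)=-1$, and $U(\mathbf{g}_\sigma)\,K^{s(\mathbf{g})}[U(\mathbf{h}_\tau)] = U\big((\mathbf{g}\mathbf{h})_{\sigma+\tau+\lambda(\mathbf{g},\mathbf{h})}\big)$ for all $\mathbf{g}_\sigma,\mathbf{h}_\tau\in G_f$ (i.e. no one-dimensional unitary/antiunitary representation $\mathbf{g}_\sigma\mapsto U(\mathbf{g}_\sigma)K^{s(\mathbf{g})}$ of $G_f$ in which $P_f$ acts as $-1$); (ii) the function $(\mathbf{g},\mathbf{h})\mapsto(-1)^{\lambda(\mathbf{g},\mathbf{h})}$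 represents a non-trivial class in $\mathcal{H}^2(G,U_T(1))$.
   Context: $K$ denotes complex conjugation, $K[z]=\bar z$, and $K^0$ is the identity; $s(\mathbf{g})=1$ means $\mathbf{g}$ acts antiunitarily. $\mathcal{H}^2(G,U_T(1))$ is the second cohomology group of $G$ with coefficients in $U(1)$ on which $\mathbf{g}$ acts by $z\mapsto K^{s(\mathbf{g})}[z]$: a 2-cocycle is a function $\alpha:G\times G\to U(1)$ with $\alpha(\mathbf{g},\mathbf{h})\alpha(\mathbf{g}\mathbf{h},\mathbf{k})=\alpha(\mathbf{g},\mathbf{h}\mathbf{k})K^{s(\mathbf{g})}[\alpha(\mathbf{h},\mathbf{k})]$, and it is trivial if $\alpha(\mathbf{g},\mathbf{h})=\epsilon(\mathbf{g})K^{s(\mathbf{g})}[\epsilon(\mathbf{h})]/\epsilon(\mathbf{g}\mathbf{h})$ for some function $\epsilon:G\to U(1)$. In the paper, condition (i) is phrased as ''$G_f$ is enforced to break by the 0D complex-fermion invertible topological order'' (a unique ground state that is odd under the fermion parity $P_f$). *)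

(* Defs.v *)
From HB Require Import structures.
From mathcomp Require Import all_boot all_order all_algebra all_fingroup.
From mathcomp Require Import complex.
From mathcomp Require Import reals.
Set Implicit Arguments. Unset Strict Implicit. Unset Printing Implicit Defensive.
Import Order.TTheory GRing.Theory Num.Theory.
Local Open Scope ring_scope.

Definition conjK (C : numClosedFieldType) (b : bool) (z : C) : C :=
  if b then z^* else z.

(* The fermionic extension G_f = G x Z_2, element g_sigma encoded as (g, sigma),
   with product g_sigma h_tau = (gh)_{sigma + tau + lambda(g,h)}. *)
Definition gf_mul (gT : finGroupType) (lam : gT -> gT -> bool)
  (x y : gT * bool) : gT * bool :=
  ((x.1 * y.1)%g, x.2 (+) y.2 (+) lam x.1 y.1).

Definition unimod (C : numClosedFieldType) (T : Type) (f : T -> C) : Prop :=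
  forall x, `|f x| = 1.

Definition is_UT_cocycle (gT : finGroupType) (C : numClosedFieldType)
  (s : gT -> bool) (alpha : gT -> gT -> C) : Prop :=
  (forall g h, `|alpha g h| = 1) /\
  forall g h k, alpha g h * alpha (g * h)%g k = alpha g (h * k)%g * conjK (s g) (alpha h k).

Definition is_UT_coboundary (gT : finGroupType) (C : numClosedFieldType)
  (s : gT -> bool) (alpha : gT -> gT -> C) : Prop :=
  exists eps : gT -> C, unimod eps /\
    forall g h, alpha g h = eps g * conjK (s g) (eps h) / eps (g * h)%g.

Definition nontrivial_H2_class (gT : finGroupType) (C : numClosedFieldType)
  (s : gT -> bool) (alpha : gT -> gT -> C) : Prop :=
  is_UT_cocycle s alpha /\ ~ is_UT_coboundary s alpha.

(* Main.v *)
Require Import Defs.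
From HB Require Import structures.
From mathcomp Require Import all_boot all_order all_algebra all_fingroup.
From mathcomp Require Import complex.
From mathcomp Require Import reals.
Import Order.TTheory GRing.Theory Num.Theory.
Local Open Scope ring_scope.

Lemma signX (C : numClosedFieldType) (a b : bool) :
  (-1 : C) ^+ (a (+) b) = (-1) ^+ a * (-1) ^+ b.
Proof. by case: a; case: b; rewrite /= ?expr0 ?expr1 ?mulrNN ?mulr1 ?mul1r. Qed.

Lemma conjK_sign (C : numClosedFieldType) (b c : bool) (z : C) :
  conjK b ((-1) ^+ c * z) = (-1) ^+ c * conjK b z.
Proof. by case: b => //=; rewrite /conjK rmorphM rmorphXn rmorphN1. Qed.

Lemma conjK_norm (C : numClosedFieldType) (b : bool) (z : C) :
  `|conjK b z| = `|z|.
Proof. by case: b => //=; rewrite /conjK norm_conjC. Qed.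

Lemma norm_sign (C : numClosedFieldType) (c : bool) : `|(-1 : C) ^+ c| = 1.
Proof. by case: c; rewrite ?expr0 ?expr1 ?normrN normr1. Qed.

Theorem mainTheorem1 (R : realType) (gT : finGroupType)
  (s : gT -> bool) (lam : gT -> gT -> bool)
  (s_hom : forall g h : gT, s (g * h)%g = s g (+) s h)
  (lam_cocycle : forall g h k : gT,
     lam h k (+) lam (g * h)%g k (+) lam g (h * k)%g (+) lam g h = false)
  (lam_norm1 : forall g : gT, lam 1%g g = false)
  (lam_norm2 : forall g : gT, lam g 1%g = false) :
  (~ exists U : gT * bool -> R[i],
       unimod U /\ U (1%g, false) = 1 /\ U (1%g, true) = -1 /\
       forall x y : gT * bool,
         U x * conjK (s x.1) (U y) = U (gf_mul lam x y))
  <->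
  nontrivial_H2_class s (fun g h : gT => (-1 : R[i]) ^+ lam g h).
Proof.
have s1 : s 1%g = false.
  by have := s_hom 1%g 1%g; rewrite mulg1; case: (s 1%g).
have coc : is_UT_cocycle s (fun g h : gT => (-1 : R[i]) ^+ lam g h).
  split=> [g h|g h k]; first exact: norm_sign.
  have E := lam_cocycle g h k.
  have -> : conjK (s g) ((-1 : R[i]) ^+ lam h k) = (-1) ^+ lam h k.
    by case: (s g) => //; rewrite /conjK rmorphXn rmorphN1.
  rewrite -!signX; congr (_ ^+ _).
  by move: E; case: (lam h k); case: (lam (g*h)%g k); case: (lam g (h*k)%g); case: (lam g h).
have AB : (exists U : gT * bool -> R[i],
       unimod U /\ U (1%g, false) = 1 /\ U (1%g, true) = -1 /\
       forall x y : gT * bool,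
         U x * conjK (s x.1) (U y) = U (gf_mul lam x y))
  <-> is_UT_coboundary s (fun g h : gT => (-1 : R[i]) ^+ lam g h).
  split.
  - move=> [U [Un [U1 [UP UM]]]].
    have Ut : forall g, U (g, true) = - U (g, false).
      move=> g; have := UM (1%g, true) (g, false).
      by rewrite /gf_mul /= mul1g lam_norm1 s1 /conjK UP mulN1r.
    exists (fun g => U (g, false)); split=> [g|g h]; first exact: Un.
    have := UM (g, false) (h, false); rewrite /gf_mul /= => ->.
    have nz : U ((g * h)%g, false) != 0.
      by rewrite -normr_eq0 Un oner_neq0.
    by case: (lam g h); rewrite ?expr0 ?expr1 ?Ut ?mulNr divff.
  - move=> [eps [En Ee]].
    have e1 : eps 1%g = 1.
      have := Ee 1%g 1%g; rewrite lam_norm1 expr0 s1 /conjK mulg1.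
      have nz : eps 1%g != 0 by rewrite -normr_eq0 En oner_neq0.
      by rewrite mulfK.
    exists (fun x : gT * bool => (-1) ^+ x.2 * eps x.1); split=> [[g b]|].
      by rewrite /= normrM norm_sign En mulr1.
    split; first by rewrite /= e1 expr0 mulr1.
    split; first by rewrite /= e1 expr1 mulr1.
    move=> [g a] [h b]; rewrite /gf_mul /= conjK_sign !signX.
    have nz : eps (g * h)%g != 0 by rewrite -normr_eq0 En oner_neq0.
    have E2 : eps g * conjK (s g) (eps h) = (-1) ^+ lam g h * eps (g * h)%g.
      by rewrite Ee divfK.
    rewrite -[LHS]mulrA -[RHS]mulrA -[RHS]mulrA.
    by rewrite [X in _ * X = _]mulrCA E2.
split.
- by move=> nA; split=> // /AB.
- by move=> [_ nB] /AB.
Qed.
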